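(* Let $c\in(0,1)$ be a constant with the following property: for every Poisson Binomial distribution $q$ on $\mathbb Z_{\geq 0}$ with mode $k^*$, one has $q(k^* )\geq \frac{c}{\sqrt{k^*+1}}$. Let $p:\mathbb Z_{\geq 0}\to\mathbb R_{\geq 0}$ be a Poisson Binomial distribution and let $k\geq 1$ be an integer with $$p(k)<\frac{c}{12\sqrt{3(k+1)}}.$$ Set $P_{<k}=\sum_{i<k}p(i)$ and $P_{>k}=\sum_{i>k}p(i)$. Then: (1) if the mode of $p$ is less than $k$, then $P_{>k}\leq \frac12-\frac{c}{12}$; (2) if the mode of $p$ is greater than $k$, then $P_{<k}\leq \frac12-\frac{c}{12}$.
   Context: A Poisson Binomial distribution is the distribution on $\mathbb Z_{\geq 0}$ of $\sum_{i=1}^N b_i$ where $N$ is a nonnegative integer and $b_1,\dots,b_N$ are independent Bernoulli random variables with arbitrary success probabilities $\pi_i\in[0,1]$. The mode of a distribution $p$ on $\mathbb Z_{\geq 0}$ is the smallest integer maximizing $p$ (ties are broken by taking the smaller value). *)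

(* Defs.v *)
From HB Require Import structures.
From mathcomp Require Import all_boot all_order all_algebra.
From mathcomp Require Import reals.
Set Implicit Arguments. Unset Strict Implicit. Unset Printing Implicit Defensive.
Import Order.TTheory GRing.Theory Num.Theory.
Local Open Scope ring_scope.

Definition pb_pmf (R : realType) (N : nat) (pi : 'I_N -> R) (k : nat) : R :=
  \sum_(S : {set 'I_N} | #|S| == k)
     ((\prod_(i in S) pi i) * (\prod_(i in ~: S) (1 - pi i))).

Definition probs_ok (R : realType) (N : nat) (pi : 'I_N -> R) : Prop :=
  forall i, 0 <= pi i <= 1.

Definition is_mode (R : realType) (p : nat -> R) (m : nat) : Prop :=
  (forall j, p j <= p m) /\ (forall j, (j < m)%N -> p j < p m).

(* P_{<k} and P_{>k}; for a PB distribution with N trials p i = 0 for i > N,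
   so the (infinite) sum P_{>k} is the finite sum over k < i <= N. *)
Definition P_lt (R : realType) (p : nat -> R) (k : nat) : R :=
  \sum_(0 <= i < k) p i.
Definition P_gt (R : realType) (N : nat) (p : nat -> R) (k : nat) : R :=
  \sum_(k.+1 <= i < N.+1) p i.

(* Main.v *)
Require Import Defs.
From HB Require Import structures.
From mathcomp Require Import all_boot all_order all_algebra.
From mathcomp Require Import reals ring lra zify.
Import Order.TTheory GRing.Theory Num.Theory.
Set Implicit Arguments. Unset Strict Implicit. Unset Printing Implicit Defensive.
Local Open Scope ring_scope.

Definition PBpoly (R : realType) (N : nat) (pi : 'I_N -> R) : {poly R} :=
  \prod_(i < N) (pi i *: 'X + (1 - pi i)%:P).

Lemma prod_if (T : comNzRingType) (I : finType) (S : {set I}) (F G : I -> T) :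
  \prod_i (if i \in S then F i else G i) = \prod_(i in S) F i * \prod_(i in ~: S) G i.
Proof.
rewrite (bigID (mem S)) /=; congr (_ * _).
  by apply: eq_big => // i /= Hi; rewrite Hi.
by apply: eq_big => [i|i /= Hi]; rewrite ?in_setC // (negbTE Hi).
Qed.

Lemma pmf_coef (R : realType) (N : nat) (pi : 'I_N -> R) n :
  pb_pmf pi n = (PBpoly pi)`_n.
Proof.
rewrite /PBpoly (@bigA_distr _ _ _ _ _ _ (fun i => pi i *: 'X) (fun i => (1 - pi i)%:P)).
rewrite coef_sum /pb_pmf big_mkcond /=; apply: eq_bigr => S _.
rewrite prod_if.
rewrite scaler_prodr -rmorph_prod -scalerAl coefZ coefMC coefXn.
by rewrite eq_sym; case: (n == #|S|); rewrite /= ?mul1r ?mul0r ?mulr0.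
Qed.
Definition Fz (R : realType) (p : {poly R}) (z : int) : R :=
  match z with Posz n => p`_n | Negz _ => 0 end.

Definition TP2 (R : realType) (G : int -> R) :=
  forall s t d : int, s <= t -> 0 <= d -> G (s - d) * G (t + d) <= G s * G t.

Lemma Fz_step (R : realType) (p : {poly R}) (a : R) (z : int) :
  Fz (p * (a *: 'X + (1 - a)%:P)) z = (1 - a) * Fz p z + a * Fz p (z - 1).
Proof.
case: z => [n|n] /=.
  rewrite mulrDr coefD -scalerAr coefZ coefMX coefMC.
  case: n => [|n].
    have -> : ((0:int) - 1) = Negz 0 by [].
    by rewrite eqxx /= !mulr0 add0r addr0 mulrC.
  have -> : ((Posz n.+1) - 1) = Posz n by rewrite -addn1 PoszD addrK.
  by rewrite /= addrC mulrC.
by rewrite !mulr0 addr0.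
Qed.

Lemma TP2_step (R : realType) (G : int -> R) (a : R) :
  0 <= a -> a <= 1 -> (forall z, 0 <= G z) -> TP2 G ->
  TP2 (fun z => (1 - a) * G z + a * G (z - 1)).
Proof.
move=> a0 a1 G0 H s t d st d0 /=.
have H1 := H s t d st d0.
have H2 : G (s - d - 1) * G (t + d - 1) <= G (s - 1) * G (t - 1).
  have h : s - 1 <= t - 1 by lia.
  have := H (s - 1) (t - 1) d h d0.
  have -> : s - 1 - d = s - d - 1 by ring.
  by have -> : t - 1 + d = t + d - 1 by ring.
have H3 : G (s - d - 1) * G (t + d) <= G (s - 1) * G t.
  have h : s - 1 <= t by lia.
  have := H (s - 1) t d h d0.
  by have -> : s - 1 - d = s - d - 1 by ring.
have H4 : G (s - d) * G (t + d - 1) <= G s * G (t - 1).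
  case: (ltP s t) => st'.
    have h : s <= t - 1 by lia.
    have := H s (t - 1) d h d0.
    by have -> : t - 1 + d = t + d - 1 by ring.
  have ts : t = s by lia.
  rewrite ts.
  case: (ltP 0 d) => dp; last first.
    have -> : d = 0 by lia.
    by rewrite subr0.
  have h1 : s - 1 <= s by lia.
  have h2 : 0 <= d - 1 by lia.
  have := H (s - 1) s (d - 1) h1 h2.
  have -> : s - 1 - (d - 1) = s - d by ring.
  have -> : s + (d - 1) = s + d - 1 by ring.
  by rewrite [G s * _]mulrC.
have b0 : 0 <= 1 - a by lra.
set b := 1 - a.
have -> : (b * G (s - d) + a * G (s - d - 1)) * (b * G (t + d) + a * G (t + d - 1))
  = b ^+ 2 * (G (s - d) * G (t + d)) + (a * b) * (G (s - d) * G (t + d - 1))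
    + (a * b) * (G (s - d - 1) * G (t + d)) + a ^+ 2 * (G (s - d - 1) * G (t + d - 1)) by ring.
have -> : (b * G s + a * G (s - 1)) * (b * G t + a * G (t - 1))
  = b ^+ 2 * (G s * G t) + (a * b) * (G s * G (t - 1))
    + (a * b) * (G (s - 1) * G t) + a ^+ 2 * (G (s - 1) * G (t - 1)) by ring.
have ab : 0 <= a * b by apply: mulr_ge0.
have b2 : 0 <= b ^+ 2 by apply: exprn_ge0.
have a2 : 0 <= a ^+ 2 by apply: exprn_ge0.
apply: lerD; first apply: lerD; first apply: lerD.
- exact: ler_wpM2l.
- exact: ler_wpM2l.
- exact: ler_wpM2l.
- exact: ler_wpM2l.
Qed.

Lemma coef_step (R : realType) (p : {poly R}) (a : R) (n : nat) :
  (p * (a *: 'X + (1 - a)%:P))`_n = (1 - a) * p`_n + a * (if n is n'.+1 then p`_n' else 0).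
Proof.
rewrite mulrDr coefD -scalerAr coefZ coefMX coefMC.
case: n => [|n].
  by rewrite eqxx mulr0 add0r addr0 mulrC.
by rewrite /= addrC mulrC.
Qed.

Lemma Fz_ge0 (R : realType) (p : {poly R}) : (forall n, 0 <= p`_n) -> forall z, 0 <= Fz p z.
Proof. by move=> H [n|n] /=. Qed.

Lemma PB_props (R : realType) (N : nat) (pi : 'I_N -> R) : probs_ok pi ->
  [/\ forall n, 0 <= (PBpoly pi)`_n, forall n, (N < n)%N -> (PBpoly pi)`_n = 0
    & TP2 (Fz (PBpoly pi))].
Proof.
elim: N pi => [|N IH] pi hpi.
  rewrite /PBpoly big_ord0; split.
  - by move=> n; rewrite coef1; case: (n == 0)%N.
  - by move=> [|n] //= _; rewrite coef1.
  - have E : forall z, Fz 1 z = (z == 0)%:R :> R.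
      by case=> [[|n]|n] /=; rewrite ?coef1.
    move=> s t d st d0; rewrite !E.
    case: eqP => [h1|_]; last by rewrite mul0r mulr_ge0 ?ler0n.
    case: eqP => [h2|_]; last by rewrite mulr0 mulr_ge0 ?ler0n.
    have -> : s = 0 by lia.
    by have -> : t = 0 by lia.
set pi' := fun i : 'I_N => pi (widen_ord (leqnSn N) i).
have hpi' : probs_ok pi' by move=> i; exact: hpi.
have [IH1 IH2 IH3] := IH pi' hpi'.
have -> : PBpoly pi = PBpoly pi' * (pi ord_max *: 'X + (1 - pi ord_max)%:P).
  by rewrite /PBpoly big_ord_recr.
have /andP [a0 a1] := hpi ord_max.
set a := pi ord_max.
have b0 : 0 <= 1 - a by rewrite subr_ge0.
split.
- move=> n; rewrite coef_step; apply: addr_ge0; first exact: mulr_ge0.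
  by apply: mulr_ge0 => //; case: n.
- move=> n hn; rewrite coef_step IH2; last by lia.
  case: n hn => [//|n] hn; rewrite IH2; last by lia.
  by rewrite !mulr0 addr0.
- move=> s t d st d0; rewrite !Fz_step.
  exact: (TP2_step a0 a1 (Fz_ge0 IH1) IH3 st d0).
Qed.

Lemma PB_sum (R : realType) (N : nat) (pi : 'I_N -> R) : probs_ok pi ->
  \sum_(0 <= i < N.+1) (PBpoly pi)`_i = 1.
Proof.
move=> hpi; have [_ H2 _] := PB_props hpi.
have hs : (size (PBpoly pi) <= N.+1)%N by apply/leq_sizeP => j hj; apply: H2.
rewrite big_mkord.
have := horner_coef_wide 1 hs.
under eq_bigr => i _ do rewrite expr1n mulr1.
move=> <-.
rewrite /PBpoly horner_prod; apply: big1 => i _.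
by rewrite hornerD hornerZ hornerX hornerC mulr1 addrC subrK.
Qed.
Definition good (R : realType) (f : nat -> R) N :=
  [/\ forall n, 0 <= f n, forall n, (N < n)%N -> f n = 0,
      \sum_(0 <= i < N.+1) f i = 1 &
      forall s t d, (d <= s)%N -> (s <= t)%N -> f (s - d)%N * f (t + d)%N <= f s * f t].

Lemma sum_le1 (R : realType) (f : nat -> R) N : good f N ->
  forall a b, \sum_(a <= i < b) f i <= 1.
Proof.
move=> [H0 HN Hs _] a b.
have S0 : forall a b, 0 <= \sum_(a <= i < b) f i by move=> x y; apply: sumr_ge0.
case: (leqP a b) => ab; last by rewrite big_geq // ltnW.
apply: (@le_trans _ _ (\sum_(0 <= i < b) f i)).
  by rewrite (big_cat_nat (leq0n a) ab) /= ler_wpDl.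
case: (leqP b N.+1) => bN.
  by rewrite -Hs (big_cat_nat (leq0n b) bN) /= ler_wpDr.
rewrite (big_cat_nat (leq0n N.+1) (ltnW bN)) /= Hs.
rewrite big_nat_cond big1 ?addr0 // => i /andP [/andP [hi _] _]; exact: HN.
Qed.

Lemma case1 (R : realType) (f : nat -> R) N k m : good f N -> is_mode f m -> (m < k)%N ->
  f m * P_gt N f k <= f k.
Proof.
move=> G [Hm1 Hm2] mk; have [H0 HN Hs HT] := G.
rewrite /P_gt.
have kL : k.+1 = (m.+1 + (k - m))%N by lia.
rewrite kL big_addn mulr_sumr.
apply: (@le_trans _ _ (\sum_(m.+1 <= i < N.+1 - (k - m)) f k * f i)).
  apply: ler_sum_nat => i /andP [hi1 hi2].
  case: (leqP i k) => ik.
    have := HT i k (i - m)%N _ ik.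
    have -> : (i - (i - m) = m)%N by lia.
    have -> : (k + (i - m) = i + (k - m))%N by lia.
    by rewrite [f i * _]mulrC; apply; lia.
  have := HT k i (k - m)%N _ (ltnW ik).
  have -> : (k - (k - m) = m)%N by lia.
  by apply; lia.
rewrite -mulr_sumr -{2}(mulr1 (f k)); apply: ler_wpM2l => //.
exact: (sum_le1 G).
Qed.

Lemma tp (R : realType) (f : nat -> R) N a b c d : good f N ->
  (a <= c)%N -> (a <= d)%N -> (a + b = c + d)%N -> f a * f b <= f c * f d.
Proof.
move=> [_ _ _ HT] ac ad e.
case: (leqP c d) => cd.
  have := HT c d (c - a)%N _ cd.
  have -> : (c - (c - a) = a)%N by lia.
  have -> : (d + (c - a) = b)%N by lia.
  by apply; lia.
have := HT d c (d - a)%N _ (ltnW cd).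
have -> : (d - (d - a) = a)%N by lia.
have -> : (c + (d - a) = b)%N by lia.
by rewrite [f c * _]mulrC; apply; lia.
Qed.

Lemma case2a (R : realType) (f : nat -> R) N k m : good f N -> is_mode f m -> (k < m)%N ->
  0 < f m -> forall x, (x < k)%N -> f x <= f k.
Proof.
move=> G [Hm1 _] km fm0 x xk.
have h : f x * f m <= f k * f (x + (m - k))%N by apply: (tp G); lia.
rewrite -(ler_pM2r fm0); apply: (le_trans h); apply: ler_wpM2l; first by have [H0 _ _ _] := G.
exact: Hm1.
Qed.

Lemma case2b (R : realType) (f : nat -> R) N k m : good f N -> is_mode f m -> (k < m)%N ->
  f m * P_lt f k <= f k.
Proof.
move=> G [Hm1 _] km; rewrite /P_lt mulr_sumr.
apply: (@le_trans _ _ (\sum_(0 <= x < k) f k * f (x + (m - k))%N)).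
  apply: ler_sum_nat => x /andP [_ xk]; rewrite mulrC; apply: (tp G); lia.
rewrite -mulr_sumr -{2}(mulr1 (f k)); apply: ler_wpM2l; first by have [H0 _ _ _] := G.
have := sum_le1 G (m - k)%N (k + (m - k))%N.
by rewrite -{1}(add0n (m - k)%N) big_addn addnK.
Qed.

Lemma case2c (R : realType) (f : nat -> R) N k m : good f N -> is_mode f m -> (k < m)%N ->
  0 < f m -> (m.+1 - k)%N%:R * f k <= 1.
Proof.
move=> G [Hm1 _] km fm0.
apply: (@le_trans _ _ (\sum_(k <= y < m.+1) f y)); last exact: (sum_le1 G).
have -> : (m.+1 - k)%N%:R * f k = \sum_(k <= y < m.+1) f k by rewrite sumr_const_nat mulr_natl.
apply: ler_sum_nat => y /andP [ky ym].
have h : f k * f m <= f y * f (k + m - y)%N by apply: (tp G); lia.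
rewrite -(ler_pM2r fm0); apply: (le_trans h); apply: ler_wpM2l; first by have [H0 _ _ _] := G.
exact: Hm1.
Qed.

Lemma good_pb (R : realType) (N : nat) (pi : 'I_N -> R) : probs_ok pi ->
  good (pb_pmf pi) N.
Proof.
move=> hpi; have [H1 H2 H3] := PB_props hpi.
split.
- by move=> n; rewrite pmf_coef.
- by move=> n hn; rewrite pmf_coef H2.
- under eq_bigr do rewrite pmf_coef; exact: PB_sum.
- move=> s t d ds st; rewrite !pmf_coef.
  have sd : ((Posz s) <= Posz t) by rewrite lez_nat.
  have := H3 s t d sd (lez_nat 0 d).
  by rewrite subzn // -PoszD.
Qed.

Lemma arith1 (R : realType) (c Fm u v eps P : R) :
  0 < c -> c < 1 -> 0 < u -> u <= v -> 0 <= P ->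
  c <= Fm * u -> eps * (12 * v) < c -> Fm * P <= eps -> P <= 1 / 2 - c / 12.
Proof.
move=> c0 c1 u0 uv P0 h1 h2 h3.
have v0 : 0 < v by apply: lt_le_trans uv.
have Fm0 : 0 < Fm.
  by have := lt_le_trans c0 h1; rewrite pmulr_lgt0.
have X0 : 0 < Fm * v by apply: mulr_gt0.
have : (Fm * v) * (12 * P) < (Fm * v) * 1.
  have e1 : (Fm * v) * (12 * P) = 12 * v * (Fm * P) by ring.
  rewrite e1 mulr1.
  apply: (le_lt_trans (y := 12 * v * eps)); first by apply: ler_wpM2l => //; nra.
  rewrite mulrC; apply: (lt_le_trans h2); apply: (le_trans h1).
  by apply: ler_wpM2l => //; apply: ltW.
rewrite ltr_pM2l // => h.
lra.
Qed.

Lemma arith2 (R : realType) (c Fm w v eps P K M1 : R) :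
  0 < c -> c < 1 -> 0 < w -> 0 < v -> 0 <= P -> P <= 1 -> 0 <= eps -> 0 <= Fm -> 0 <= K ->
  w ^+ 2 = M1 -> v ^+ 2 = 3 * (K + 1) ->
  c <= Fm * w -> eps * (12 * v) < c -> Fm * P <= eps -> P <= K * eps ->
  (M1 - K) * eps <= 1 -> P <= 1 / 2 - c / 12.
Proof.
move=> c0 c1 w0 v0 P0 P1 e0 F0 K0 hw hv h1 h2 h3 h4 h5.
rewrite leNgt; apply/negP => hP.
have s1 : c * P <= w * eps.
  apply: (le_trans (y := Fm * w * P)); first by apply: ler_wpM2r.
  have -> : Fm * w * P = w * (Fm * P) by ring.
  by apply: ler_wpM2l => //; apply: ltW.
have s2 : (c * P) ^+ 2 <= (w * eps) ^+ 2.
  by rewrite ler_pXn2r // ?nnegrE; [nra|nra].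
have s3 : M1 * eps ^+ 2 <= eps + K * eps ^+ 2 by nra.
have s4 : (eps * (12 * v)) ^+ 2 < c ^+ 2.
  by rewrite ltr_pXn2r // ?nnegrE; [nra|nra].
have s4' : 432 * K * eps ^+ 2 < c ^+ 2 by nra.
have s5 : P * eps <= K * eps ^+ 2 by nra.
have s6 : c ^+ 2 * P ^+ 2 <= eps + K * eps ^+ 2 by nra.
have s7 : 432 * c ^+ 2 * P ^+ 3 <= 432 * K * eps ^+ 2 + P * (432 * K * eps ^+ 2) by nra.
have s8 : 432 * c ^+ 2 * P ^+ 3 <= c ^+ 2 + P * c ^+ 2 by nra.
have cc : 0 < c ^+ 2 by apply: exprn_gt0.
have s9 : 432 * P ^+ 3 <= 1 + P.
  rewrite -(ler_pM2l cc); nra.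
nra.
Qed.

Unset Implicit Arguments.
Theorem lemma2 (R : realType) (c : R) (hc0 : 0 < c) (hc1 : c < 1)
  (hc : forall (M : nat) (rho : 'I_M -> R) (m : nat),
        probs_ok rho -> is_mode (pb_pmf rho) m ->
        c / Num.sqrt (m.+1)%:R <= pb_pmf rho m)
  (N : nat) (pi : 'I_N -> R) (hpi : probs_ok pi) (k : nat) (hk : (1 <= k)%N)
  (hpk : pb_pmf pi k < c / (12 * Num.sqrt (3 * (k.+1)%:R))) :
  (forall m : nat, is_mode (pb_pmf pi) m -> (m < k)%N ->
     P_gt N (pb_pmf pi) k <= 1 / 2 - c / 12) /\
  (forall m : nat, is_mode (pb_pmf pi) m -> (k < m)%N ->
     P_lt (pb_pmf pi) k <= 1 / 2 - c / 12).
Proof.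
have G := good_pb hpi.
have [H0 _ _ _] := G.
have v0 : 0 < Num.sqrt (3 * (k.+1)%:R : R) by rewrite sqrtr_gt0; apply: mulr_gt0.
have hpk' : pb_pmf pi k * (12 * Num.sqrt (3 * (k.+1)%:R : R)) < c.
  by rewrite -ltr_pdivlMr // mulr_gt0.
split=> m Hm mk.
- have hcm := hc N pi m hpi Hm.
  have w0 : 0 < Num.sqrt ((m.+1)%:R : R) by rewrite sqrtr_gt0.
  rewrite ler_pdivrMr // in hcm.
  apply: (arith1 hc0 hc1 w0 _ _ hcm hpk' (case1 G Hm mk)).
  + rewrite ler_sqrt; last by apply: mulr_ge0.
    rewrite -natrM ler_nat; lia.
  + by apply: sumr_ge0.
- have hcm := hc N pi m hpi Hm.
  have w0 : 0 < Num.sqrt ((m.+1)%:R : R) by rewrite sqrtr_gt0.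
  rewrite ler_pdivrMr // in hcm.
  have Fm0 : 0 < pb_pmf pi m.
    by have := lt_le_trans hc0 hcm; rewrite pmulr_lgt0.
  apply: (arith2 (K := k%:R) (M1 := (m.+1)%:R) hc0 hc1 w0 v0 _ _ _ _ _ _ _ hcm hpk' (case2b G Hm mk)).
  + by apply: sumr_ge0.
  + exact: (sum_le1 G).
  + exact: H0.
  + exact: H0.
  + exact: ler0n.
  + by rewrite sqr_sqrtr.
  + by rewrite sqr_sqrtr ?natr1 //; apply: mulr_ge0.
  + rewrite /P_lt; apply: (le_trans (y := \sum_(0 <= x < k) pb_pmf pi k)).
      by apply: ler_sum_nat => x /andP [_ xk]; apply: (case2a G Hm mk Fm0).
    by rewrite sumr_const_nat subn0 mulr_natl.
  + have h := case2c G Hm mk Fm0.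
    have km1 : (k <= m.+1)%N by lia.
    by rewrite natrB in h.
Qed.
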